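(* Let $f$ be a perfect coloring of $H(n,q)$ with quotient matrix $S$, and let $p$ be a positive integer. Then there exists a perfect coloring of $H(n,pq)$ with quotient matrix $pS+n(p-1)I$. In particular, if there is a $(b,c)$-coloring of $H(n,q)$, then there is a $(pb,pc)$-coloring of $H(n,pq)$.
   Context: The Hamming graph $H(n,q)$ has vertex set $\mathbb{Z}_q^n$, two vertices adjacent iff they differ in exactly one coordinate. A perfect $k$-coloring is a surjective map $f$ from the vertex set onto $\{1,\dots,k\}$ such that every vertex of color $i$ has exactly $s_{i,j}$ neighbours of color $j$ (constants depending only on $i,j$); $S=(s_{i,j})$ is the quotient matrix. $I$ is the identity matrix. A $(b,c)$-coloring of $H(n,q)$ is a perfect $2$-coloring with quotient matrix $\begin{pmatrix} n(q-1)-b & b\\ c & n(q-1)-c\end{pmatrix}$. *)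

(* Defs.v *)
From mathcomp Require Import all_boot all_algebra.
Set Implicit Arguments. Unset Strict Implicit. Unset Printing Implicit Defensive.

Definition hvert (n q : nat) := {ffun 'I_n -> 'I_q}.

Definition hadj (n q : nat) (x y : hvert n q) : bool :=
  #|[set i : 'I_n | x i != y i]| == 1%N.

Definition perfect_coloring (n q k : nat) (f : hvert n q -> 'I_k)
  (S : 'M[nat]_k) : Prop :=
  (forall c : 'I_k, exists x : hvert n q, f x = c) /\
  (forall (x : hvert n q) (j : 'I_k),
     #|[set y : hvert n q | hadj x y & f y == j]| = S (f x) j).

Definition mx2 (a b c d : nat) : 'M[nat]_2 :=
  \matrix_(i < 2, j < 2)
    if i == ord0 then (if j == ord0 then a else b)
    else (if j == ord0 then c else d).

Definition bc_coloring (n q b c : nat) (f : hvert n q -> 'I_2) : Prop :=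
  perfect_coloring f (mx2 (n * (q - 1) - b) b c (n * (q - 1) - c)).

(* Main.v *)
Require Import Defs.
From mathcomp Require Import all_boot all_algebra.
From mathcomp Require Import zify.
Set Implicit Arguments. Unset Strict Implicit. Unset Printing Implicit Defensive.

Lemma modlt p q (v : 'I_(p*q)) : v %% q < q.
Proof. by case: q v => [|q] [m Hm] /=; [rewrite muln0 in Hm | rewrite ltn_mod]. Qed.

Definition pmod p q (v : 'I_(p*q)) : 'I_q := Ordinal (modlt v).
Definition hproj n p q (x : hvert n (p*q)) : hvert n q := [ffun i => pmod (x i)].
Definition upd n r (x : hvert n r) (i : 'I_n) (v : 'I_r) : hvert n r :=
  [ffun j => if j == i then v else x j].

Lemma card_set_sum (T : finType) (Q : pred T) :
  #|[set t | Q t]| = \sum_t (Q t : nat).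
Proof.
rewrite -sum1_card big_mkcond /=; apply: eq_bigr => t _; rewrite inE.
by case: (Q t).
Qed.

Lemma nbr_count n r (x : hvert n r) (P : pred (hvert n r)) :
  #|[set y | hadj x y & P y]| =
  \sum_(i < n) #|[set v : 'I_r | (v != x i) && P (upd x i v)]|.
Proof.
have E : [set y | hadj x y & P y] =
  [set upd x u.1 u.2 | u in [set u : 'I_n * 'I_r | (u.2 != x u.1) && P (upd x u.1 u.2)]].
  apply/setP => y; rewrite !inE; apply/andP/imsetP.
  - case=> Hadj Py; move: Hadj; rewrite /hadj => /cards1P [i Hi].
    have Yeq : y = upd x i (y i).
      apply/ffunP=> j; rewrite ffunE; case: eqP => [->//|ne].
      have : j \notin [set i0 | x i0 != y i0] by rewrite Hi inE; apply/eqP.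
      by rewrite inE negbK => /eqP ->.
    exists (i, y i) => //; rewrite inE /= -Yeq Py andbT.
    have : i \in [set i0 | x i0 != y i0] by rewrite Hi set11.
    by rewrite inE eq_sym.
  - case=> [[i v]]; rewrite inE /= => /andP [Hv HP] ->; split=> //.
    rewrite /hadj; apply/cards1P; exists i; apply/setP=> j; rewrite !inE ffunE.
    by case: (j =P i) => [->|ne]; [rewrite eq_sym | rewrite eqxx].
rewrite E card_in_imset.
  rewrite card_set_sum.
  transitivity (\sum_(i < n) \sum_(v : 'I_r) (((v != x i) && P (upd x i v)) : nat)).
    by rewrite pair_big.
  by apply: eq_bigr => i _; rewrite card_set_sum.
move=> [i v] [i' v']; rewrite !inE /= => /andP [Hv _] /andP [Hv' _] Heq.
have := congr1 (fun z : hvert n r => z i) Heq; rewrite /= !ffunE eqxx.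
case: (i =P i') => [<- ->//|ne Hvi]; by rewrite Hvi eqxx in Hv.
Qed.

Lemma sum_mod p q (F : nat -> nat) :
  \sum_(v < p*q) F (v %% q) = p * \sum_(m < q) F m.
Proof.
elim: p => [|p IH]; first by rewrite mul0n big_ord0.
rewrite -(big_mkord xpredT (fun v => F (v %% q))) in IH.
rewrite -(big_mkord xpredT (fun v => F (v %% q))).
rewrite mulSnr (@big_cat_nat _ _ _ (p*q) 0 (p*q+q)) //; last by rewrite leq_addr.
rewrite /= IH.
rewrite -{1}(add0n (p*q)) big_addn addKn big_mkord mulSnr; congr (_ + _).
apply: eq_bigr => i _; by rewrite addnC modnMDl modn_small.
Qed.

Lemma upd_proj n p q (x : hvert n (p*q)) i v :
  hproj (upd x i v) = upd (hproj x) i (pmod v).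
Proof. by apply/ffunP=> l; rewrite !ffunE; case: (l == i). Qed.

Lemma upd_id n r (x : hvert n r) i : upd x i (x i) = x.
Proof. by apply/ffunP=> l; rewrite ffunE; case: (l =P i) => [->|]. Qed.

Lemma term_i n p q k (f : hvert n q -> 'I_k) (x : hvert n (p*q)) (j : 'I_k)
  (i : 'I_n) : 0 < p ->
  #|[set v : 'I_(p*q) | (v != x i) && (f (hproj (upd x i v)) == j)]| =
  p * #|[set w : 'I_q | (w != hproj x i) && (f (upd (hproj x) i w) == j)]|
  + (f (hproj x) == j) * (p - 1).
Proof.
move=> Hp; set X := hproj x.
set Fo := fun w : 'I_q => ((f (upd X i w) == j) : nat).
set Fn := fun m => oapp Fo 0 (insub m).
have FnE : forall w : 'I_q, Fn w = Fo w by move=> w; rewrite /Fn valK.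
have eE : Fo (X i) = (f X == j) by rewrite /Fo upd_id.
have T1 : \sum_(v : 'I_(p*q)) Fn (v %% q) = p * \sum_(w : 'I_q) Fo w.
  by rewrite sum_mod; congr (_ * _); apply: eq_bigr => w _; rewrite FnE.
have L : \sum_(v : 'I_(p*q)) (((v != x i) && (f (hproj (upd x i v)) == j)) : nat)
   = \sum_(v | v != x i) Fn (v %% q).
  rewrite [RHS]big_mkcond; apply: eq_bigr => v _; rewrite upd_proj.
  by case: (v != x i) => //=; rewrite -[v %% q]/(val (pmod v)) FnE.
have R : \sum_(w : 'I_q) (((w != X i) && (f (upd X i w) == j)) : nat)
   = \sum_(w | w != X i) Fo w.
  by rewrite [RHS]big_mkcond; apply: eq_bigr => w _; case: (w != X i).
have Tv : \sum_(v : 'I_(p*q)) Fn (v %% q) = Fn (x i %% q) + \sum_(v | v != x i) Fn (v %% q).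
  by rewrite (bigD1 (x i)).
have Tw : \sum_(w : 'I_q) Fo w = Fo (X i) + \sum_(w | w != X i) Fo w.
  by rewrite (bigD1 (X i)).
have XE : Fn (x i %% q) = Fo (X i) by rewrite -[x i %% q]/(val (pmod (x i))) FnE /X ffunE.
rewrite !card_set_sum L R.
rewrite /= in Tv Tw. rewrite XE eE in Tv. rewrite eE in Tw.
rewrite T1 in Tv. rewrite Tw in Tv.
move: Tv; case: (f X == j) => /=; set A := \sum_(v | _) _; set B := \sum_(w | _) _; nia.
Qed.

Lemma deg n r (x : hvert n r) : #|[set y | hadj x y & true]| = n * (r - 1).
Proof.
rewrite (nbr_count x predT).
rewrite (eq_bigr (fun _ => r - 1)); first by rewrite sum_nat_const card_ord.
move=> i _; rewrite card_set_sum.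
rewrite (eq_bigr (fun v => ((v != x i) : nat))); last by move=> v _; rewrite andbT.
rewrite -card_set_sum.
have -> : [set v | v != x i] = [set~ x i] by apply/setP=> v; rewrite !inE.
by rewrite cardsC1 card_ord subn1.
Qed.

Lemma part1 (n q k p : nat) (f : hvert n q -> 'I_k) (S : 'M[nat]_k) :
     perfect_coloring f S -> 0 < p ->
     exists g : hvert n (p * q) -> 'I_k,
       perfect_coloring g
         (\matrix_(i < k, j < k) (p * S i j + (i == j) * (n * (p - 1)))%N).
Proof.
move=> [surj cnt] Hp; exists (fun x => f (hproj x)); split.
  move=> c; have [X HX] := surj c.
  exists [ffun i => widen_ord (leq_pmull q Hp) (X i)]; rewrite -HX; congr f.
  by apply/ffunP=> i; rewrite !ffunE; apply/val_inj => /=; rewrite modn_small.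
move=> x j; rewrite mxE (nbr_count x (fun y => f (hproj y) == j)).
rewrite -(cnt (hproj x) j) (nbr_count (hproj x) (fun y => f y == j)).
under eq_bigr => i _ do rewrite term_i //.
by rewrite big_split /= -big_distrr /= sum_nat_const card_ord mulnCA.
Qed.

Lemma bound_entry n q k (f : hvert n q -> 'I_k) (S : 'M[nat]_k) (a b : 'I_k) :
  perfect_coloring f S -> S a b <= n * (q - 1).
Proof.
move=> [surj cnt]; have [X HX] := surj a.
rewrite -HX -(cnt X b) -(deg X); apply: subset_leq_card.
by apply/subsetP=> y; rewrite !inE => /andP [-> _].
Qed.

Lemma part2 (n q p b c : nat) (f : hvert n q -> 'I_2) :
     bc_coloring b c f -> 0 < p ->
     exists g : hvert n (p * q) -> 'I_2, bc_coloring (p * b) (p * c) g.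
Proof.
move=> Hf Hp; have [g Hg] := part1 Hf Hp; exists g.
have Hb := bound_entry ord0 (lift ord0 ord0) Hf.
have Hc := bound_entry (lift ord0 ord0) ord0 Hf.
rewrite !mxE /= in Hb Hc.
have Hnq : n = 0 \/ 0 < q.
  case: Hf => [surj _]; have [X _] := surj ord0.
  case: (posnP n) => [->|Hn]; [by left | right].
  exact: (leq_ltn_trans (leq0n _) (ltn_ord (X (Ordinal Hn)))).
have key : n * (p * q - 1) = p * (n * (q - 1)) + n * (p - 1).
  case: Hnq => [->|]; first by rewrite !mul0n muln0.
  move=> Hq; rewrite mulnCA -mulnDr; congr (n * _).
  nia.
rewrite /bc_coloring.
set M := (X in perfect_coloring g X) in Hg.
suff <- : M = mx2 (n * (p * q - 1) - p * b) (p * b) (p * c) (n * (p * q - 1) - p * c) by [].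
rewrite key; apply/matrixP => i j; rewrite !mxE.
case: i => [[|[|//]] Hi]; case: j => [[|[|//]] Hj] /=;
  rewrite ?mul1n ?mul0n ?addn0 // mulnBr.
  - by have := leq_mul (leqnn p) Hb; move: (p * _) (p * b) (p * c) (n * (p - 1)) => *; lia.
  - by have := leq_mul (leqnn p) Hc; move: (p * _) (p * b) (p * c) (n * (p - 1)) => *; lia.
Qed.

Theorem theorem5 :
  (forall (n q k p : nat) (f : hvert n q -> 'I_k) (S : 'M[nat]_k),
     perfect_coloring f S -> 0 < p ->
     exists g : hvert n (p * q) -> 'I_k,
       perfect_coloring g
         (\matrix_(i < k, j < k) (p * S i j + (i == j) * (n * (p - 1)))%N))
  /\
  (forall (n q p b c : nat) (f : hvert n q -> 'I_2),
     bc_coloring b c f -> 0 < p ->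
     exists g : hvert n (p * q) -> 'I_2, bc_coloring (p * b) (p * c) g).
Proof. split; [exact: part1 | exact: part2]. Qed.
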